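(* For every $n\ge2$, $$\sum_{k=1}^{n-2}k^2\,f_{k,n}=\frac13(4n+1)(2n-3)!!-\frac32(2n-2)!!.$$
   Context: $\mathcal{T}_n$ is the set of fully resolved (binary) rooted trees with leaves bijectively labeled by $\{1,\dots,n\}$, and $f_{k,n}=|\{T\in\mathcal{T}_n:\varphi_T(1,2)=k\}|$, where $\varphi_T(1,2)$ is the depth (number of arcs from the root) of the lowest common ancestor of leaves $1$ and $2$. Double factorials: $(2m-1)!!=(2m-1)(2m-3)\cdots1$, $(2m)!!=(2m)(2m-2)\cdots2$, $0!!=1$; an empty sum is $0$. *)

(* Defs.v *)
From HB Require Import structures.
From mathcomp Require Import all_boot all_order all_algebra.
Set Implicit Arguments. Unset Strict Implicit. Unset Printing Implicit Defensive.

Inductive tree := Leaf of nat | Node of tree & tree.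

Fixpoint leaves (t : tree) : seq nat :=
  match t with Leaf a => [:: a] | Node l r => leaves l ++ leaves r end.

Definition minl (s : seq nat) : nat := foldr minn (head 0 s) s.

(* Canonical planar representative of an unordered (non-planar) tree:
   at every internal node, the smallest leaf label of the left subtree is
   smaller than that of the right subtree.  Since the leaf labels are
   distinct, every unordered leaf-labelled binary tree has exactly one such
   representative. *)
Fixpoint canon (t : tree) : bool :=
  match t with
  | Leaf _ => true
  | Node l r => [&& minl (leaves l) < minl (leaves r), canon l & canon r]
  end.

Definition in_Tn (n : nat) (t : tree) : bool :=
  perm_eq (leaves t) (iota 1 n) && canon t.

Fixpoint lca12_depth (t : tree) : nat :=
  match t with
  | Leaf _ => 0
  | Node l r =>
      if (1 \in leaves l) && (2 \in leaves l) then (lca12_depth l).+1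
      else if (1 \in leaves r) && (2 \in leaves r) then (lca12_depth r).+1
      else 0
  end.

Fixpoint trees_upto (fuel m n : nat) : seq tree :=
  match fuel with
  | 0 => [::]
  | fuel'.+1 =>
      if m == 1 then [seq Leaf a | a <- iota 1 n]
      else flatten [seq [seq Node l r | l <- trees_upto fuel' i n,
                                         r <- trees_upto fuel' (m - i) n]
                   | i <- iota 1 m.-1]
  end.

Definition trees (m n : nat) : seq tree := trees_upto m m n.

Definition f (k n : nat) : nat :=
  count (fun t => in_Tn n t && (lca12_depth t == k)) (trees n n).

Fixpoint dfact (m : nat) : nat :=
  match m with
  | 0 => 1
  | 1 => 1
  | (m'.+1 as m1).+1 => m1.+1 * dfact m'
  end.

(* Main.v *)
Require Import Defs.
From HB Require Import structures.
From mathcomp Require Import all_boot all_order all_algebra.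
From mathcomp Require Import ring zify.
Set Implicit Arguments. Unset Strict Implicit. Unset Printing Implicit Defensive.

Fixpoint tree_eqb (a b : tree) : bool :=
  match a, b with
  | Leaf x, Leaf y => x == y
  | Node l r, Node l' r' => tree_eqb l l' && tree_eqb r r'
  | _, _ => false
  end.

Lemma tree_eqP : Equality.axiom tree_eqb.
Proof.
move=> a; elim: a => [x|l IHl r IHr] [y|l' r'] /=; try by constructor.
- by apply: (iffP eqP) => [->|[]].
- apply: (iffP andP) => [[/IHl -> /IHr ->]//|[<- <-]].
  by split; [apply/IHl|apply/IHr].
Qed.

HB.instance Definition _ := hasDecEq.Build tree tree_eqP.

Lemma eq_LeafE a b : (Leaf a == Leaf b) = (a == b). Proof. by []. Qed.
Lemma eq_NodeE a b c d : (Node a b == Node c d) = (a == c) && (b == d).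
Proof.
by apply/eqP/andP => [[-> ->]|[/eqP -> /eqP ->]].
Qed.
Lemma eq_LN a b c : (Leaf a == Node b c) = false. Proof. by []. Qed.
Lemma eq_NL a b c : (Node b c == Leaf a) = false. Proof. by []. Qed.

Lemma leaves_pos t : 0 < size (leaves t).
Proof. by elim: t => //= l IHl r IHr; rewrite size_cat addn_gt0 IHl. Qed.

Lemma minl_spec s : s != [::] -> minl s \in s /\ forall y, y \in s -> minl s <= y.
Proof.
case: s => // a s _; rewrite /minl /=.
have H : forall s', foldr minn a s' \in a :: s' /\ (forall y, y \in s' -> foldr minn a s' <= y) /\ foldr minn a s' <= a.
  elim=> [|b s' [IH1 [IH2 IH3]]] /=; first by rewrite mem_seq1 eqxx; split => // y; rewrite in_nil.
  split; [|split].
  - rewrite /minn; case: ifP => _; first by rewrite !inE eqxx orbT.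
    by move: IH1; rewrite !inE => /orP [->|->]; rewrite ?orbT.
  - move=> y; rewrite inE => /orP [/eqP ->|/IH2 Hy]; first by rewrite geq_minl.
    by rewrite geq_min Hy orbT.
  - by rewrite geq_min IH3 orbT.
have [H1 [H2 H3]] := H s.
split.
- rewrite /minn; case: ifP => _; first by rewrite inE eqxx.
  by move: H1; rewrite !inE => /orP [->|->]; rewrite ?orbT.
- move=> y; rewrite inE => /orP [/eqP ->|/H2 Hy]; first by rewrite geq_minl.
  by rewrite geq_min Hy orbT.
Qed.

Lemma minl_ext s1 s2 x : s1 != [::] -> s2 != [::] ->
  (forall y, y \in s1 -> y < x) ->
  (forall y, (y \in s2) = (y \in s1) || (y == x)) -> minl s2 = minl s1.
Proof.
move=> n1 n2 Hx Hm.
have [m1 l1] := minl_spec n1; have [m2 l2] := minl_spec n2.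
apply/eqP; rewrite eqn_leq; apply/andP; split.
- by apply: l2; rewrite Hm m1.
- move: m2; rewrite Hm => /orP [/l1 //|/eqP ->].
  by apply: ltnW; apply: Hx.
Qed.
Fixpoint ins (x : nat) (t : tree) : seq tree :=
  match t with
  | Leaf a => [:: Node (Leaf a) (Leaf x)]
  | Node l r => Node (Node l r) (Leaf x) ::
      ([seq Node l' r | l' <- ins x l] ++ [seq Node l r' | r' <- ins x r])
  end.

Fixpoint del (x : nat) (t : tree) : tree :=
  match t with
  | Leaf a => Leaf a
  | Node l r => if r == Leaf x then l else if l == Leaf x then r
                else Node (del x l) (del x r)
  end.

Lemma ins_node x t t' : t' \in ins x t -> exists a b, t' = Node a b.
Proof.
case: t => [a|l r] /=; first by rewrite inE => /eqP ->; eauto.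
rewrite inE mem_cat => /orP [/eqP ->|/orP [/mapP [l' _ ->]|/mapP [r' _ ->]]]; eauto.
Qed.

Lemma ins_neq_leaf x t t' a : t' \in ins x t -> (t' == Leaf a) = false.
Proof. by move=> /ins_node [? [? ->]]. Qed.

Lemma leaves_ins x t t' : t' \in ins x t -> perm_eq (leaves t') (x :: leaves t).
Proof.
elim: t t' => [a|l IHl r IHr] t' /=.
  by rewrite inE => /eqP -> /=; rewrite (perm_catC [:: a] [:: x]).
rewrite inE mem_cat => /orP [/eqP ->|/orP [/mapP [l' Hl' ->]|/mapP [r' Hr' ->]]] /=.
- by rewrite perm_catC.
- by rewrite -cat_cons perm_cat2r IHl.
- apply: (perm_trans (perm_cat (perm_refl _) (IHr _ Hr'))).
  by rewrite -cat1s perm_catCA.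
Qed.

Lemma mem_leaves_ins x t t' y : t' \in ins x t ->
  (y \in leaves t') = (y \in leaves t) || (y == x).
Proof. by move=> /leaves_ins /perm_mem ->; rewrite inE orbC. Qed.

Lemma size_ins x t : size (ins x t) = (size (leaves t)).*2.-1.
Proof.
elim: t => [a|l IHl r IHr] //=.
rewrite size_cat !size_map IHl IHr size_cat.
move: (leaves_pos l) (leaves_pos r); rewrite -!mul2n; lia.
Qed.

Lemma head_ins x t : Node t (Leaf x) \in ins x t.
Proof. by case: t => [a|l r] /=; rewrite inE eqxx. Qed.

Lemma del_id x t : x \notin leaves t -> del x t = t.
Proof.
elim: t => [a|l IHl r IHr] //=; rewrite mem_cat negb_or => /andP [nl nr].
have -> : (r == Leaf x) = false.
  by apply/negbTE; apply: contra nr => /eqP ->; rewrite /= inE.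
have -> : (l == Leaf x) = false.
  by apply/negbTE; apply: contra nl => /eqP ->; rewrite /= inE.
by rewrite IHl ?IHr.
Qed.

Lemma del_ins x t t' : x \notin leaves t -> t' \in ins x t -> del x t' = t.
Proof.
elim: t t' => [a|l IHl r IHr] t' /=.
  by move=> _; rewrite inE => /eqP -> /=; rewrite eqxx.
rewrite mem_cat negb_or => /andP [nl nr].
have rx : (r == Leaf x) = false.
  by apply/negbTE; apply: contra nr => /eqP ->; rewrite /= inE.
have lx : (l == Leaf x) = false.
  by apply/negbTE; apply: contra nl => /eqP ->; rewrite /= inE.
rewrite inE mem_cat => /orP [/eqP ->|/orP [/mapP [l' Hl' ->]|/mapP [r' Hr' ->]]] /=.
- by rewrite eqxx.
- by rewrite rx (ins_neq_leaf _ Hl') (IHl _ nl Hl') del_id.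
- by rewrite lx (ins_neq_leaf _ Hr') (IHr _ nr Hr') del_id.
Qed.

Lemma uniq_ins x t : x \notin leaves t -> uniq (ins x t).
Proof.
elim: t => [a|l IHl r IHr] //=.
rewrite mem_cat negb_or => /andP [nl nr].
rewrite cat_uniq !map_inj_uniq ?IHl ?IHr //; last by move=> ? ? [].
  2: by move=> ? ? [].
rewrite andbT; apply/andP; split.
- rewrite mem_cat negb_or; apply/andP; split.
  + apply/mapP => -[l' _ [_ E]]; move: nr; rewrite -E /= inE eqxx //.
  + apply/mapP => -[r' Hr' [_ E]].
    by move: (ins_neq_leaf x Hr'); rewrite -E eqxx.
- apply/hasPn => t' /mapP [r' Hr' ->]; apply/mapP => -[l' _ [_ E]].
  by move: nr; rewrite -E (mem_leaves_ins _ Hr') eqxx orbT.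
Qed.

Lemma leaves_nil t : leaves t != [::].
Proof. by rewrite -size_eq0 -lt0n leaves_pos. Qed.

Lemma minl1 a : minl [:: a] = a.
Proof. by rewrite /minl /= minnn. Qed.

Lemma minl_ins x t t' : (forall y, y \in leaves t -> y < x) -> t' \in ins x t ->
  minl (leaves t') = minl (leaves t).
Proof.
move=> Hx Ht'; apply: (minl_ext (leaves_nil _) (leaves_nil _) Hx).
by move=> y; rewrite (mem_leaves_ins _ Ht').
Qed.

Lemma minl_lt x t : (forall y, y \in leaves t -> y < x) -> minl (leaves t) < x.
Proof. by move=> Hx; apply: Hx; case: (minl_spec (leaves_nil t)). Qed.

Lemma canon_ins x t t' : (forall y, y \in leaves t -> y < x) -> t' \in ins x t ->
  canon t' = canon t.
Proof.
elim: t t' => [a|l IHl r IHr] t' /= Hx.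
  rewrite inE => /eqP -> /=; rewrite !minl1 !andbT; apply: Hx; exact: mem_head.
have Hl : forall y, y \in leaves l -> y < x by move=> y Hy; apply: Hx; rewrite mem_cat Hy.
have Hr : forall y, y \in leaves r -> y < x by move=> y Hy; apply: Hx; rewrite mem_cat Hy orbT.
rewrite inE mem_cat => /orP [/eqP ->|/orP [/mapP [l' Hl' ->]|/mapP [r' Hr' ->]]] /=.
- rewrite minl1 andbT; have -> // : minl (leaves l ++ leaves r) < x.
  by apply: (minl_lt (t := Node l r)).
- by rewrite (minl_ins Hl Hl') (IHl _ Hl Hl').
- by rewrite (minl_ins Hr Hr') (IHr _ Hr Hr').
Qed.

Lemma ins_del x t' : uniq (leaves t') -> x \in leaves t' -> canon t' ->
  (forall y, y \in leaves t' -> y <= x) -> t' != Leaf x -> t' \in ins x (del x t').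
Proof.
elim: t' => [a|l IHl r IHr] /=.
  by rewrite inE => _ /eqP ->; rewrite eqxx.
rewrite cat_uniq mem_cat => /and3P [ul dlr ur] xin /and3P [cmp cl cr] Hle _.
have Hl : forall y, y \in leaves l -> y <= x by move=> y Hy; apply: Hle; rewrite mem_cat Hy.
have Hr : forall y, y \in leaves r -> y <= x by move=> y Hy; apply: Hle; rewrite mem_cat Hy orbT.
case: ifP => [/eqP rx|rx]; first by rewrite rx head_ins.
case: ifP => [/eqP lx|lx].
  exfalso; move: cmp; rewrite lx /= minl1 => cmp.
  have [m1 _] := minl_spec (leaves_nil r).
  by move: (Hr _ m1); rewrite leqNgt cmp.
case/orP: xin => [xl|xr].
- have nxr : x \notin leaves r by apply: contra dlr => xr; apply/hasP; exists x.
  rewrite (del_id nxr) /= inE mem_cat; apply/orP; right; apply/orP; left.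
  by apply/mapP; exists l => //; apply: IHl => //; rewrite lx.
- have nxl : x \notin leaves l by apply: contra dlr => xl; apply/hasP; exists x.
  rewrite (del_id nxl) /= inE mem_cat; apply/orP; right; apply/orP; right.
  by apply/mapP; exists r => //; apply: IHr => //; rewrite rx.
Qed.

Fixpoint Tlist (n : nat) : seq tree :=
  if n is m.+1 then (if m is 0 then [:: Leaf 1]
                     else flatten [seq ins n t | t <- Tlist m])
  else [::].

Lemma perm_iotaS n : perm_eq (iota 1 n.+1) (n.+1 :: iota 1 n).
Proof.
rewrite -[n.+1]addn1 iotaD perm_catC /= add1n addn1.
by [].
Qed.

Lemma sumn_pred1 (T : eqType) (s : seq T) a (b : bool) :
  sumn [seq (b && (t == a) : nat) | t <- s] = b * count_mem a s.
Proof.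
elim: s => [|y s IH] /=; first by rewrite muln0.
by rewrite IH mulnDr; clear IH; case: b; case: (y == a).
Qed.

Lemma in_Tn_props n t : in_Tn n t ->
  [/\ uniq (leaves t), size (leaves t) = n, canon t &
      forall y, (y \in leaves t) = (0 < y <= n)].
Proof.
case/andP=> p c; split => //.
- by rewrite (perm_uniq p) iota_uniq.
- by rewrite (perm_size p) size_iota.
- by move=> y; rewrite (perm_mem p) mem_iota add1n ltnS.
Qed.

Lemma key_ins m t t' : in_Tn m.+1 t ->
  count_mem t' (ins m.+2 t) = in_Tn m.+2 t' && (t == del m.+2 t').
Proof.
move=> Ht; have [ut st ct mt] := in_Tn_props Ht.
have nx : m.+2 \notin leaves t by rewrite mt ltnn andbF.
have lt : forall y, y \in leaves t -> y < m.+2 by move=> y; rewrite mt => /andP [].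
rewrite count_uniq_mem ?uniq_ins //.
congr (nat_of_bool _); apply/idP/idP.
- move=> Ht'; rewrite (del_ins nx Ht') eqxx andbT.
  rewrite /in_Tn (canon_ins lt Ht') ct andbT.
  apply: (perm_trans (leaves_ins Ht')); rewrite perm_sym.
  apply: (perm_trans (perm_iotaS _)); rewrite perm_cons perm_sym.
  by case/andP: Ht.
- case/andP => H' /eqP ->.
  have [ut' st' ct' mt'] := in_Tn_props H'.
  apply: ins_del => //; first by rewrite mt' ltnSn.
  + by move=> y; rewrite mt' => /andP [].
  + by apply/eqP => E; move: st'; rewrite E.
Qed.

Lemma del_in_Tn m t' : in_Tn m.+2 t' -> in_Tn m.+1 (del m.+2 t').
Proof.
move=> H'; have [ut' st' ct' mt'] := in_Tn_props H'.
have Hin : t' \in ins m.+2 (del m.+2 t').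
  apply: ins_del => //; first by rewrite mt' ltnSn.
  + by move=> y; rewrite mt' => /andP [].
  + by apply/eqP => E; move: st'; rewrite E.
have P : perm_eq (leaves (del m.+2 t')) (iota 1 m.+1).
  rewrite -(perm_cons m.+2) perm_sym.
  apply: (perm_trans _ (leaves_ins Hin)); rewrite perm_sym.
  apply: (perm_trans _ (perm_iotaS _)).
  by case/andP: H'.
rewrite /in_Tn P /=.
rewrite -(canon_ins _ Hin) //.
by move=> y; rewrite (perm_mem P) mem_iota add1n ltnS => /andP [_ ?].
Qed.

Lemma count_Tlist n t : 0 < n -> count_mem t (Tlist n) = in_Tn n t.
Proof.
case: n => // n _; elim: n t => [|m IH] t'.
- rewrite /= /in_Tn; case: t' => [a|l r] /=.
  + rewrite eq_LeafE addn0 andbT eq_sym.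
    congr (nat_of_bool _); apply/idP/idP => [/eqP ->//|/perm_mem H].
    by move: (H a); rewrite !inE eqxx => /esym.
  + case P: (perm_eq _ _) => //=.
    move: (perm_size P); rewrite size_cat /=.
    by move: (leaves_pos l) (leaves_pos r); lia.
- rewrite [Tlist _]/= count_flatten -map_comp.
  rewrite (_ : map _ _ = [seq (in_Tn m.+2 t' && (t == del m.+2 t') : nat) | t <- Tlist m.+1]).
    rewrite sumn_pred1 IH.
    by case H: (in_Tn m.+2 t') => //=; rewrite del_in_Tn.
  apply/eq_in_map => t Ht /=; rewrite key_ins //.
  have c : 0 < count_mem t (Tlist m.+1) by rewrite -has_count has_pred1.
  by rewrite IH lt0b in c.
Qed.

Lemma count_allpairs_node (L R : seq tree) l0 r0 :
  count_mem (Node l0 r0) [seq Node l r | l <- L, r <- R] = count_mem l0 L * count_mem r0 R.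
Proof.
elim: L => [|l L IH] //=.
rewrite count_cat IH count_map mulnDl; congr (_ + _).
case: (l =P l0) => [->|ne].
  by rewrite mul1n; apply: eq_count => r /=; rewrite eq_NodeE eqxx.
rewrite mul0n; apply/eqP; rewrite -leqn0 leqNgt -has_count; apply/negP => /hasP [r _] /=.
by rewrite eq_NodeE => /andP [/eqP].
Qed.

Lemma count_allpairs_leaf (L R : seq tree) a :
  count_mem (Leaf a) [seq Node l r | l <- L, r <- R] = 0.
Proof.
elim: L => [|l L IH] //=.
rewrite count_cat IH count_map addn0.
by apply/eqP; rewrite -leqn0 leqNgt -has_count; apply/negP => /hasP [r _].
Qed.

Definition lab n t := all (fun a => 0 < a <= n) (leaves t).

Lemma count_trees fuel m n t : 0 < m <= fuel ->
  count_mem t (trees_upto fuel m n) = (size (leaves t) == m) && lab n t.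
Proof.
elim: fuel m t => [|fuel IH] m t; first by case: m.
case/andP=> m0 mf /=.
case: (m =P 1) => [->|m1].
- rewrite count_map; case: t => [a|l r] /=.
  + rewrite (eq_count (a2 := pred1 a)); last by move=> y /=; rewrite eq_LeafE.
    by rewrite count_uniq_mem ?iota_uniq // mem_iota add1n ltnS /lab /= andbT.
  + rewrite size_cat; move: (leaves_pos l) (leaves_pos r) => p1 p2.
    have -> : (size (leaves l) + size (leaves r) == 1) = false by apply/eqP; lia.
    by apply/eqP; rewrite -leqn0 leqNgt -has_count; apply/negP => /hasP [y _].
- rewrite count_flatten -map_comp; case: t => [a|l0 r0].
  + rewrite (_ : map _ _ = [seq 0 | i <- iota 1 m.-1]).
      have -> : (1 == m) = false by apply/eqP; lia.
      by elim: (iota 1 m.-1).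
    by apply/eq_map => i /=; rewrite count_allpairs_leaf.
  + rewrite (_ : map _ _ = [seq ((lab n l0 && lab n r0 && (size (leaves r0) == m - size (leaves l0)))
                                  && (i == size (leaves l0)) : nat) | i <- iota 1 m.-1]).
      rewrite sumn_pred1 count_uniq_mem ?iota_uniq // mem_iota /lab /= all_cat size_cat.
      move: (leaves_pos l0) (leaves_pos r0).
      case: (all _ (leaves l0)); case: (all _ (leaves r0)); rewrite /= ?andbF //.
      move=> p0 p1.
      case: (size (leaves r0) =P m - size (leaves l0)) => E1;
      case: (size (leaves l0) + size (leaves r0) =P m) => E2;
      case: (leqP 1 (size (leaves l0))) => //= E3; try lia;
      case: (ltnP (size (leaves l0)) (1 + m.-1)) => //= E4; lia.
    apply/eq_in_map => i; rewrite mem_iota => /andP [i1 i2] /=.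
    rewrite count_allpairs_node !IH; try (apply/andP; split; lia).
    rewrite /lab; case: (size (leaves l0) =P i) => [<-|ne].
      rewrite !eqxx /=; case: (all _ (leaves l0)); case: (all _ (leaves r0)); 
      case: (_ == _); rewrite /= ?muln0 ?muln1 //.
    have -> : (i == size (leaves l0)) = false by apply/eqP => E; apply: ne.
    by rewrite /= andbF.
Qed.

Lemma f_Tlist k n : 0 < n ->
  f k n = count (fun t => lca12_depth t == k) (Tlist n).
Proof.
move=> n0; rewrite /f.
rewrite (eq_count (a2 := predI (fun t => lca12_depth t == k) (in_Tn n))); last first.
  by move=> t /=; rewrite andbC.
rewrite -count_filter.
suff /permP -> : perm_eq (filter (in_Tn n) (trees n n)) (Tlist n) by [].
rewrite /perm_eq; apply/allP => t _ /=; apply/eqP.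
rewrite count_filter count_Tlist //.
case H: (in_Tn n t).
- rewrite (eq_count (a2 := pred1 t)); last by move=> y /=; case: eqP => // ->; rewrite H.
  have [_ st _ mt] := in_Tn_props H.
  rewrite count_trees; last by rewrite n0 leqnn.
  rewrite st eqxx /=; suff -> : lab n t by [].
  by apply/allP => y; rewrite mt.
- rewrite (eq_count (a2 := pred0)); first by rewrite count_pred0.
  by move=> y /=; case: eqP => // ->; rewrite H andbF.
Qed.

Notation D := lca12_depth.
Definition both t := (1 \in leaves t) && (2 \in leaves t).

Lemma depthN l r : D (Node l r) = if both l then (D l).+1 else if both r then (D r).+1 else 0.
Proof. by []. Qed.

Lemma both_ins x t t' : 2 < x -> t' \in ins x t -> both t' = both t.
Proof.
move=> x2 H; rewrite /both !(mem_leaves_ins _ H).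
have -> : (1 == x) = false by apply/eqP => E; move: x2; rewrite -E.
have -> : (2 == x) = false by apply/eqP => E; move: x2; rewrite -E ltnn.
by rewrite !orbF.
Qed.

Lemma bothN l r : both (Node l r) = ((1 \in leaves l) || (1 \in leaves r)) && ((2 \in leaves l) || (2 \in leaves r)).
Proof. by rewrite /both /= !mem_cat. Qed.

Lemma sum_const_seq (T : Type) (s : seq T) (c : nat) : \sum_(i <- s) c = size s * c.
Proof. by elim: s => [|y s IH]; rewrite ?big_nil ?big_cons ?IH //= mulSn. Qed.

Lemma sizes x t : exists a, size (leaves t) = a.+1 /\ size (ins x t) = (2 * a).+1.
Proof.
move: (leaves_pos t) (size_ins x t); case: (size (leaves t)) => // a _ ->.
by exists a; split => //; rewrite -mul2n; lia.
Qed.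

Lemma ins_mom x t : 2 < x -> both t ->
  \sum_(t' <- ins x t) D t' = (size (leaves t)).*2 * D t + 1 /\
  \sum_(t' <- ins x t) D t' ^ 2 = (size (leaves t)).*2.+1 * D t ^ 2 + 3 * D t + 1.
Proof.
move=> x2; elim: t => [a|l IHl r IHr].
  by rewrite /both /= !inE => /andP [/eqP <- /eqP].
move=> Hb; rewrite [ins _ _]/= !big_cons !big_cat !big_map.
rewrite [D (Node (Node l r) _)]depthN Hb.
have [a [sl il]] := sizes x l; have [b [sr ir]] := sizes x r.
rewrite [leaves (Node l r)]/= size_cat sl sr -!mul2n.
case Bl: (both l).
- have [IH1 IH2] := IHl Bl.
  have E1 : \sum_(l' <- ins x l) D (Node l' r) = \sum_(l' <- ins x l) D l' + size (ins x l).
    by rewrite -sum1_size -big_split; apply: eq_big_seq => l' H; rewrite depthN (both_ins x2 H) Bl -addn1.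
  have E2 : \sum_(r' <- ins x r) D (Node l r') = size (ins x r) * (D l).+1.
    by rewrite -sum_const_seq; apply: eq_big_seq => r' H; rewrite depthN Bl.
  have E3 : \sum_(l' <- ins x l) D (Node l' r) ^ 2 = \sum_(l' <- ins x l) D l' ^ 2 + 2 * \sum_(l' <- ins x l) D l' + size (ins x l).
    by rewrite -sum1_size big_distrr -!big_split; apply: eq_big_seq => l' H; rewrite depthN (both_ins x2 H) Bl /=; ring.
  have E4 : \sum_(r' <- ins x r) D (Node l r') ^ 2 = size (ins x r) * (D l).+1 ^ 2.
    by rewrite -sum_const_seq; apply: eq_big_seq => r' H; rewrite depthN Bl.
  rewrite E1 E2 E3 E4 IH1 IH2 il ir sl [D (Node l r)]depthN Bl -!mul2n /=; split; ring.
- case Br: (both r).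
  + have [IH1 IH2] := IHr Br.
    have E1 : \sum_(r' <- ins x r) D (Node l r') = \sum_(r' <- ins x r) D r' + size (ins x r).
      by rewrite -sum1_size -big_split; apply: eq_big_seq => r' H; rewrite depthN (both_ins x2 H) Bl Br -addn1.
    have E2 : \sum_(l' <- ins x l) D (Node l' r) = size (ins x l) * (D r).+1.
      by rewrite -sum_const_seq; apply: eq_big_seq => l' H; rewrite depthN (both_ins x2 H) Bl Br.
    have E3 : \sum_(r' <- ins x r) D (Node l r') ^ 2 = \sum_(r' <- ins x r) D r' ^ 2 + 2 * \sum_(r' <- ins x r) D r' + size (ins x r).
      by rewrite -sum1_size big_distrr -!big_split; apply: eq_big_seq => r' H; rewrite depthN (both_ins x2 H) Bl Br /=; ring.
    have E4 : \sum_(l' <- ins x l) D (Node l' r) ^ 2 = size (ins x l) * (D r).+1 ^ 2.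
      by rewrite -sum_const_seq; apply: eq_big_seq => l' H; rewrite depthN (both_ins x2 H) Bl Br.
    rewrite E1 E2 E3 E4 IH1 IH2 il ir sr [D (Node l r)]depthN Bl Br -!mul2n /=; split; ring.
  + have E1 : \sum_(l' <- ins x l) D (Node l' r) = 0.
      by rewrite big1_seq // => l' /andP [_ H]; rewrite depthN (both_ins x2 H) Bl Br.
    have E2 : \sum_(r' <- ins x r) D (Node l r') = 0.
      by rewrite big1_seq // => r' /andP [_ H]; rewrite depthN (both_ins x2 H) Bl Br.
    have E3 : \sum_(l' <- ins x l) D (Node l' r) ^ 2 = 0.
      by rewrite big1_seq // => l' /andP [_ H]; rewrite depthN (both_ins x2 H) Bl Br.
    have E4 : \sum_(r' <- ins x r) D (Node l r') ^ 2 = 0.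
      by rewrite big1_seq // => r' /andP [_ H]; rewrite depthN (both_ins x2 H) Bl Br.
    by rewrite E1 E2 E3 E4 [D (Node l r)]depthN Bl Br /=; split; ring.
Qed.

Lemma depth_bound t : both t -> D t + 2 <= size (leaves t).
Proof.
elim: t => [a|l IHl r IHr]; first by rewrite /both /= !inE => /andP [/eqP <- /eqP].
move=> _; rewrite depthN /= size_cat; move: (leaves_pos l) (leaves_pos r) => pl pr.
case Bl: (both l); first by move: (IHl Bl); lia.
case Br: (both r); first by move: (IHr Br); lia.
lia.
Qed.

Lemma Tlist_in n t : 0 < n -> t \in Tlist n -> in_Tn n t.
Proof.
move=> n0 Ht; have c : 0 < count_mem t (Tlist n) by rewrite -has_count has_pred1.
by rewrite count_Tlist // lt0b in c.
Qed.

Lemma Tlist_both m t : t \in Tlist m.+2 -> both t /\ size (leaves t) = m.+2.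
Proof.
move=> /(Tlist_in (ltn0Sn _)) H; have [_ st _ mt] := in_Tn_props H.
by rewrite /both !mt.
Qed.

Definition S0 n := \sum_(t <- Tlist n) 1.
Definition S1 n := \sum_(t <- Tlist n) D t.
Definition S2 n := \sum_(t <- Tlist n) D t ^ 2.

Lemma S_rec m :
  [/\ S0 m.+3 = (2 * m + 3) * S0 m.+2,
      S1 m.+3 = (2 * m + 4) * S1 m.+2 + S0 m.+2 &
      S2 m.+3 = (2 * m + 5) * S2 m.+2 + 3 * S1 m.+2 + S0 m.+2].
Proof.
have TS : Tlist m.+3 = flatten [seq ins m.+3 t | t <- Tlist m.+2] by [].
have x2 : 2 < m.+3 by [].
have -> : S0 m.+3 = \sum_(t <- flatten [seq ins m.+3 t | t <- Tlist m.+2]) 1 by [].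
have -> : S1 m.+3 = \sum_(t <- flatten [seq ins m.+3 t | t <- Tlist m.+2]) D t by [].
have -> : S2 m.+3 = \sum_(t <- flatten [seq ins m.+3 t | t <- Tlist m.+2]) D t ^ 2 by [].
have -> : S0 m.+2 = \sum_(t <- Tlist m.+2) 1 by [].
have -> : S1 m.+2 = \sum_(t <- Tlist m.+2) D t by [].
have -> : S2 m.+2 = \sum_(t <- Tlist m.+2) D t ^ 2 by [].
have HL := @Tlist_both m; move: (Tlist m.+2) HL => L HL.
rewrite !big_flatten !big_map.
split.
- have -> : \sum_(j <- L) \sum_(i <- ins m.+3 j) 1 = \sum_(j <- L) (2 * m + 3).
    apply: eq_big_seq => t Ht; have [B st] := HL _ Ht.
    by rewrite sum1_size size_ins st -mul2n; lia.
  by rewrite sum_const_seq sum1_size mulnC.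
- have -> : \sum_(j <- L) \sum_(i <- ins m.+3 j) D i = \sum_(j <- L) ((2 * m + 4) * D j + 1).
    apply: eq_big_seq => t Ht; have [B st] := HL _ Ht.
    have [-> _] := ins_mom x2 B.
    by rewrite st -mul2n; congr (_ + _); congr (_ * _); lia.
  by rewrite big_split -big_distrr.
- have -> : \sum_(j <- L) \sum_(i <- ins m.+3 j) D i ^ 2 = \sum_(j <- L) ((2 * m + 5) * D j ^ 2 + 3 * D j + 1).
    apply: eq_big_seq => t Ht; have [B st] := HL _ Ht.
    have [_ ->] := ins_mom x2 B.
    by rewrite st -mul2n; congr (_ + _ + _); congr (_ * _); lia.
  by rewrite 2!big_split -!big_distrr.
Qed.

Lemma S_base : [/\ S0 2 = 1, S1 2 = 0 & S2 2 = 0].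
Proof. by rewrite /S0 /S1 /S2 /= !big_cons !big_nil. Qed.

Lemma dfactSS m : dfact m.+2 = m.+2 * dfact m.
Proof. by []. Qed.

Import GRing.Theory Num.Theory.
Local Open Scope ring_scope.

Lemma closed m :
  [/\ (S0 m.+2)%:R = (dfact (2 * m.+2 - 3))%:R :> rat,
      (S1 m.+2)%:R = (dfact (2 * m.+2 - 2))%:R / 2%:R - (dfact (2 * m.+2 - 3))%:R :> rat &
      (S2 m.+2)%:R = 3%:R^-1 * (4 * m.+2 + 1)%N%:R * (dfact (2 * m.+2 - 3))%:R
                      - 3%:R / 2%:R * (dfact (2 * m.+2 - 2))%:R :> rat].
Proof.
elim: m => [|m [IH0 IH1 IH2]].
  by have [-> -> ->] := S_base; rewrite /=; split; field.
have [-> -> ->] := S_rec m.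
have E1 : (2 * m.+3 - 3 = (2 * m.+2 - 3).+2)%N by lia.
have E2 : (2 * m.+3 - 2 = (2 * m.+2 - 2).+2)%N by lia.
rewrite E1 E2 !dfactSS.
have E3 : ((2 * m.+2 - 3).+2 = 2 * m + 3)%N by lia.
have E4 : ((2 * m.+2 - 2).+2 = 2 * m + 4)%N by lia.
rewrite E3 E4.
move: IH0 IH1 IH2; set A := (dfact _)%:R; set B := (dfact _)%:R => IH0 IH1 IH2.
rewrite !natrD !natrM IH0 IH1 IH2 !natrD !natrM.
by split; field.
Qed.

Local Close Scope ring_scope.

Lemma count_sum (T : Type) (p : pred T) (s : seq T) : count p s = \sum_(x <- s) (p x : nat).
Proof. by elim: s => [|y s IH]; rewrite ?big_nil ?big_cons //= IH. Qed.

Lemma inner_sum n d : d + 2 <= n ->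
  \sum_(1 <= k < n.-1) k ^ 2 * (d == k) = d ^ 2.
Proof.
move=> dn.
case: d dn => [|d] dn.
  by rewrite big1_seq // => k /andP [_]; rewrite mem_index_iota; case: k => [|k] //= _; rewrite muln0.
rewrite (bigD1_seq d.+1) ?iota_uniq //=; last by rewrite mem_index_iota; lia.
rewrite eqxx muln1 big1_seq ?addn0 // => k /andP [kd _].
by rewrite eq_sym (negbTE kd) muln0.
Qed.

Lemma lhs_nat n : 2 <= n ->
  \sum_(1 <= k < n.-1) k ^ 2 * f k n = S2 n.
Proof.
case: n => [|[|m]] // _.
under eq_bigr => k _ do rewrite f_Tlist // count_sum big_distrr.
rewrite exchange_big /=.
have -> : S2 m.+2 = \sum_(t <- Tlist m.+2) D t ^ 2 by [].
apply: eq_big_seq => t Ht; have [B st] := Tlist_both Ht.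
by rewrite (inner_sum (n := m.+2)) // -st depth_bound.
Qed.

Local Open Scope ring_scope.

Theorem lemma12 (n : nat) : (2 <= n)%N ->
  \sum_(1 <= k < n.-1) ((k ^ 2 * f k n)%N%:R : rat)
  = 3%:R^-1 * (4 * n + 1)%N%:R * (dfact (2 * n - 3))%:R
    - 3%:R / 2%:R * (dfact (2 * n - 2))%:R.
Proof.
move=> n2; rewrite -natr_sum lhs_nat //.
case: n n2 => [|[|m]] // _.
by have [_ _ ->] := closed m.
Qed.
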